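(* There exist Tychonoff spaces $X$ and $Y$ such that $C_p(X,\mathbb{R})$ and $C_p(Y,\mathbb{R})$ are topologically isomorphic, but $C_p(X,\mathbb{T})$ and $C_p(Y,\mathbb{T})$ are not topologically isomorphic.
   Context: $\mathbb{T}=\mathbb{R}/\mathbb{Z}$. For a topological group $G$, $C_p(X,G)$ is the group of continuous maps $X\to G$ with pointwise group operations and the topology of pointwise convergence; topological isomorphism means isomorphism of topological groups. *)

(* Defs.v *)
From HB Require Import structures.
From mathcomp Require Import all_boot all_order all_algebra.
From mathcomp Require Import all_classical all_reals all_analysis.
Set Implicit Arguments. Unset Strict Implicit. Unset Printing Implicit Defensive.
Import Order.TTheory GRing.Theory Num.Theory.
Import numFieldNormedType.Exports.
Local Open Scope classical_set_scope.
Local Open Scope ring_scope.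

Definition tychonoff_space (X : topologicalType) : Prop :=
  completely_regular_space X /\ hausdorff_space X.

(* Underlying set of C_p(X,G): the continuous maps X -> V with values in the
   subset G of V (G is the group, carried by the topological space V),
   viewed inside V^X with the pointwise (product) topology. *)
Definition Cp (X V : topologicalType) (G : set V) : set {ptws X -> V} :=
  [set f | continuous (f : X -> V) /\ forall x, G (f x)].

Definition Cp_top_iso (V : topologicalType) (G : set V) (op : V -> V -> V)
    (X Y : topologicalType) : Prop :=
  exists (Phi : {ptws X -> V} -> {ptws Y -> V})
         (Psi : {ptws Y -> V} -> {ptws X -> V}),
  [/\ (forall f, Cp G f -> Cp G (Phi f)) /\ (forall g, Cp G g -> Cp G (Psi g)),
      (forall f, Cp G f -> Psi (Phi f) = f) /\ (forall g, Cp G g -> Phi (Psi g) = g),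
      (forall f g, Cp G f -> Cp G g ->
          Phi (fun x => op (f x) (g x)) = (fun y => op (Phi f y) (Phi g y))),
      {within Cp G, continuous Phi} &
      {within Cp G, continuous Psi}].

(* The circle group T = R/Z, realized (as a topological group) as the unit
   circle S^1 in R x R with complex multiplication; t + Z |-> (cos 2 pi t,
   sin 2 pi t) is an isomorphism of topological groups R/Z ~ S^1. *)
Definition circle (R : realType) : set (R * R)%type :=
  [set z | z.1 ^+ 2 + z.2 ^+ 2 = 1].

Definition circle_mul (R : realType) (z w : (R * R)%type) : (R * R)%type :=
  (z.1 * w.1 - z.2 * w.2, z.1 * w.2 + z.2 * w.1).

(* Main.v *)
Require Import Defs.
From HB Require Import structures.
From mathcomp Require Import all_boot all_order all_algebra.
From mathcomp Require Import all_classical all_reals all_analysis.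
From mathcomp Require Import ring lra.
Import Order.TTheory GRing.Theory Num.Theory.
Import numFieldNormedType.Exports.
Local Open Scope classical_set_scope.
Local Open Scope ring_scope.
Set Implicit Arguments. Unset Strict Implicit.

Section S.
Variable R : realType.

Definition Lf (d : int -> R) (x : R) : R :=
  d (Num.floor x) + (x - (Num.floor x)%:~R) * (d (Num.floor x + 1) - d (Num.floor x)).

Lemma Lf_int d (n : int) : Lf d n%:~R = d n.
Proof. by rewrite /Lf intrKfloor subrr mul0r addr0. Qed.

Lemma Lf_seg d (k : int) x : k%:~R <= x <= k%:~R + 1 ->
  Lf d x = d k + (x - k%:~R) * (d (k+1) - d k).
Proof.
move=> /andP[h1 h2]; have [->|ne] := eqVneq x (k%:~R + 1).
  rewrite -(intrD _ k 1) Lf_int intrD. ring.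
have fk : Num.floor x = k.
  apply: floor_def; rewrite h1 /= intrD; rewrite lt_neqAle ne h2 //.
by rewrite /Lf fk.
Qed.

Lemma Lf_cont d : continuous (Lf d).
Proof.
move=> x0; set n := Num.floor x0.
pose G (x : R) := (d n + (x - n%:~R) * (d (n+1) - d n)) +
   (Num.min (x - n%:~R) 0) * ((d n - d (n-1)) - (d (n+1) - d n)).
have eqG : \forall x \near x0, Lf d x = G x.
  have h1 := floor_le x0; have h2 := floorD1_gt x0.
  near=> x.
  have hx1 : (n - 1)%:~R < x by near: x; apply: lt_nbhsr; rewrite intrD; lra.
  have hx2 : x < (n + 1)%:~R by near: x; apply: lt_nbhsl.
  rewrite /G; case: (leP n%:~R x) => hx.
  - rewrite (Lf_seg d (k:=n)); last by rewrite hx /= ltW // -(intrD _ n 1).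
    have -> : Num.min (x - n%:~R) 0 = 0 by apply/min_idPr; lra.
    ring.
  - rewrite (Lf_seg d (k:=n-1)); last first.
      rewrite ltW //=; have -> : (n-1)%:~R + 1 = n%:~R :> R by rewrite intrB; ring.
      exact: ltW.
    have -> : Num.min (x - n%:~R) 0 = x - n%:~R by apply/min_idPl; lra.
    rewrite subrK intrB. ring.
have eqG' : \forall x \near x0, G x = Lf d x by apply: filterS eqG.
apply: cvg_trans; first exact: (near_eq_cvg eqG').
have -> : Lf d x0 = G x0.
  rewrite /G (Lf_seg d (k:=n)); last first.
    by rewrite floor_le /= ltW // -(intrD _ n 1) floorD1_gt.
  rewrite /G; have -> : Num.min (x0 - n%:~R) 0 = 0.
    by apply/min_idPr; rewrite subr_ge0 floor_le.
  ring.
rewrite /G.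
apply: cvgD; [apply: cvgD; [exact: cvg_cst|]|]; apply: cvgMl.
- by apply: cvgB; [exact: cvg_id|exact: cvg_cst].
- have := @continuous_min R R (fun x : R => x - n%:~R) (fun _ => 0) x0.
  apply.
  + by apply: cvgB; [exact: cvg_id|exact: cvg_cst].
  + exact: cvg_cst.
Unshelve. all: end_near.
Qed.

Definition SA : set R := [set x | 0 <= x].
Definition SB : set R := [set x | x = -1 \/ 0 <= x].

Lemma into_set_cont (Z : topologicalType) (S : set R) (h : Z -> S) :
  continuous (fun z => val (h z)) -> continuous h.
Proof.
move=> ch; apply/continuousP => U [V oV <-].
have := (continuousP _).1 ch V oV. done.
Qed.

Lemma val_cont (S : set R) : continuous (fun x : S => val x).
Proof. exact: initial_continuous. Qed.

Lemma set_haus (S : set R) : hausdorff_space S.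
Proof.
move=> p q cl; apply: val_inj; apply: Rhausdorff => U V nU nV.
have [w [h1 h2]] := cl _ _ (val_cont nU) (val_cont nV).
by exists (val w).
Qed.

Lemma set_tych (S : set R) : tychonoff_space S.
Proof. split; [exact: uniform_completely_regular|exact: set_haus]. Qed.


Lemma toA_pf (z : R) : Num.max z 0 \in SA.
Proof. by rewrite inE /SA /= le_max lexx orbT. Qed.
Definition toA (z : R) : SA := exist (fun x => x \in SA) (Num.max z 0) (toA_pf z).

Lemma toB_pf (z : R) : (if 0 <= z then z else -1) \in SB.
Proof. by rewrite inE /SB /=; case: ifP => h; [right|left]. Qed.
Definition toB (z : R) : SB := exist (fun x => x \in SB) _ (toB_pf z).

Lemma toA_cont : continuous toA.
Proof.
apply: into_set_cont => /=.
move=> z; apply: (@continuous_max R R (fun x : R => x) (fun _ => 0)).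
  exact: cvg_id. exact: cvg_cst.
Qed.

Lemma toA_val (x : SA) : toA (val x) = x.
Proof.
apply: val_inj => /=; apply/max_idPl; by have := set_valP x.
Qed.

Lemma toB_val (y : SB) : 0 <= val y -> toB (val y) = y.
Proof. by move=> h; apply: val_inj => /=; rewrite h. Qed.

Lemma toB_valm (y : SB) : val y = -1 -> toB (-1) = y.
Proof.
move=> h; apply: val_inj => /=; rewrite h.
by have -> : (0 <= (-1 : R)) = false by apply/negbTE; rewrite -ltNge ltrN10.
Qed.

Lemma toBA_cont : continuous (fun x : SA => toB (val x)).
Proof.
apply: into_set_cont => /=.
have -> : (fun x : SA => if 0 <= val x then val x else -1) = (fun x : SA => val x).
  by apply: funext => x; have := set_valP x; rewrite /SA /= => ->.
exact: val_cont.
Qed.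

Definition dg (g : SB -> R) (n : int) : R := g (toB (n%:~R - 1)) - g (toB n%:~R).
Definition ef (f : SA -> R) (n : int) : R := f (toA (n%:~R + 1)) - f (toA n%:~R).

Definition myPhi (g : {ptws SB -> R}) : {ptws SA -> R} :=
  fun x => g (toB (val x)) + Lf (dg g) (val x).
Definition myPsi (f : {ptws SA -> R}) : {ptws SB -> R} :=
  fun y => f (toA (val y)) + Lf (ef f) (val y).

Lemma myPhi_cont (g : SB -> R) : continuous g -> continuous (myPhi g : SA -> R).
Proof.
move=> cg.
have h1 : continuous (fun x : SA => g (toB (val x))).
  by move=> x; apply: continuous_comp; [exact: toBA_cont|exact: cg].
have h2 : continuous (fun x : SA => Lf (dg g) (val x)).
  by move=> x; apply: continuous_comp; [exact: val_cont|exact: Lf_cont].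
by move=> x; have := cvgD (h1 x) (h2 x); exact.
Qed.

Lemma myPsi_cont (f : SA -> R) : continuous f -> continuous (myPsi f : SB -> R).
Proof.
move=> cf.
have h0 : continuous (fun y : SB => toA (val y)).
  by move=> x; apply: continuous_comp; [exact: val_cont|exact: toA_cont].
have h1 : continuous (fun y : SB => f (toA (val y))).
  by move=> x; apply: continuous_comp; [exact: h0|exact: cf].
have h2 : continuous (fun x : SB => Lf (ef f) (val x)).
  by move=> x; apply: continuous_comp; [exact: val_cont|exact: Lf_cont].
by move=> x; have := cvgD (h1 x) (h2 x); exact.
Qed.


Lemma Lf_opp d1 d2 x : (forall n : int, 0 <= n -> d1 n = - d2 n) -> 0 <= x ->
  Lf d1 x = - Lf d2 x.
Proof.
move=> h x0; have f0 : 0 <= Num.floor x by rewrite floor_ge0.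
rewrite /Lf !h //; first ring.
by rewrite addr_ge0.
Qed.

Lemma val_toB_int (m : int) : -1 <= m -> val (toB m%:~R) = m%:~R :> R.
Proof.
move=> hm /=; case: ifP => // /negbT; rewrite -ltNge ltrz0 => hm0.
have -> : m = -1 by apply/eqP; rewrite eq_le hm andbT -ltzD1.
by [].
Qed.

Lemma myPsi_toB f (m : int) : -1 <= m -> myPsi f (toB m%:~R) = f (toA (m%:~R + 1)).
Proof.
move=> hm; rewrite /myPsi val_toB_int // Lf_int /ef. ring.
Qed.

Lemma PhiPsi f x : myPhi (myPsi f) x = f x.
Proof.
rewrite /myPhi; have x0 : 0 <= val x by have := set_valP x.
rewrite (@Lf_opp _ (ef f)) //; last first.
  move=> n n0; rewrite /dg.
  have -> : n%:~R - 1 = (n - 1)%:~R :> R by rewrite intrB.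
  have hn : -1 <= n by apply: le_trans n0.
  have hn1 : -1 <= n - 1 by rewrite lerBrDr addrC subrr.
  rewrite !myPsi_toB // /ef intrB subrK. ring.
rewrite /myPsi /= x0 toA_val. ring.
Qed.

Lemma toA_neg (z : R) : z <= 0 -> toA z = toA 0.
Proof. by move=> h; apply: val_inj => /=; rewrite maxxx; apply/max_idPr. Qed.

Lemma myPhi_toA g (m : int) : 0 <= m -> myPhi g (toA m%:~R) = g (toB (m%:~R - 1)).
Proof.
move=> hm; have e : val (toA m%:~R) = m%:~R by apply/max_idPl; rewrite ler0z.
rewrite /myPhi e Lf_int /dg.
ring.
Qed.

Lemma PsiPhi g y : myPsi (myPhi g) y = g y.
Proof.
have := set_valP y; rewrite /SB /= => -[ym1|y0].
  have e : \val y = -1 := ym1.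
  rewrite /myPsi e.
  have -> : (-1 : R) = (-1)%:~R by [].
  rewrite Lf_int /ef.
  rewrite (toA_neg (z := (-1)%:~R)) // (toA_neg (z := ((-1)%:~R + 1))); last first.
    by rewrite addrC subrr.
  rewrite -[X in toA X]/((0:int)%:~R) myPhi_toA //.
  rewrite sub0r (toB_valm e). ring.
rewrite /myPsi.
rewrite (@Lf_opp _ (dg g)) //; last first.
  move=> n n0; rewrite /ef.
  have -> : n%:~R + 1 = (n+1)%:~R :> R by rewrite intrD.
  rewrite myPhi_toA ?addr_ge0 // myPhi_toA // intrD addrK /dg. ring.
have e : \val y >= 0 := y0.
rewrite /myPhi /=.
have -> : Num.max (sval y) 0 = sval y by apply/max_idPl.
rewrite (toB_val e). ring.
Qed.


End S.

Section S.
Variable R : realType.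
Lemma Lf_cvg (U : topologicalType) (f : {ptws U -> R}) (D : {ptws U -> R} -> int -> R) x :
  (forall n, (fun k => D k n) @ f --> D f n) ->
  (fun k => Lf (D k) x) @ f --> Lf (D f) x.
Proof.
move=> hD; rewrite /Lf.
have h1 := hD (Num.floor x); have h2 := hD (Num.floor x + 1).
have FF : Filter (nbhs f) := nbhs_filter f.
have h3 := @cvgB _ _ _ _ FF _ _ _ _ h2 h1.
have h4 := @cvgMl_tmp _ _ _ FF _ (x - (Num.floor x)%:~R) _ h3.
have h5 := @cvgD _ _ _ _ FF _ _ _ _ h1 h4.
exact: h5.
Qed.
Lemma ev_cvg (U : topologicalType) (f : {ptws U -> R}) (p : U) :
  (fun k : {ptws U -> R} => k p) @ f --> f p.
Proof. exact: (@proj_continuous _ (fun _ : U => R) p f). Qed.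

Lemma myPsi_ptws : continuous (@myPsi R).
Proof.
move=> f; have FF : Filter (nbhs f) := nbhs_filter f.
apply/pointwise_cvgP => t.
have h1 := @ev_cvg _ f (toA (val t)).
have h2 := @Lf_cvg _ f (@ef R) (val t) (fun n => @cvgB _ _ _ _ FF _ _ _ _ (@ev_cvg _ f _) (@ev_cvg _ f _)).
exact: (@cvgD _ _ _ _ FF _ _ _ _ h1 h2).
Qed.

Lemma myPhi_ptws : continuous (@myPhi R).
Proof.
move=> f; have FF : Filter (nbhs f) := nbhs_filter f.
apply/pointwise_cvgP => t.
have h1 := @ev_cvg _ f (toB (val t)).
have h2 := @Lf_cvg _ f (@dg R) (val t) (fun n => @cvgB _ _ _ _ FF _ _ _ _ (@ev_cvg _ f _) (@ev_cvg _ f _)).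
exact: (@cvgD _ _ _ _ FF _ _ _ _ h1 h2).
Qed.

Lemma fst_cont : continuous (fun z : R * R => z.1).
Proof. move=> z; exact: cvg_fst. Qed.
Lemma snd_cont : continuous (fun z : R * R => z.2).
Proof. move=> z; exact: cvg_snd. Qed.

Lemma cmul_cont (U : topologicalType) (f g : U -> R * R) :
  continuous f -> continuous g -> continuous (fun x => circle_mul (f x) (g x)).
Proof.
move=> cf cg x.
have FF : Filter (nbhs x) := nbhs_filter x.
have f1 : (fun y => (f y).1) @ x --> (f x).1.
  by apply: continuous_comp; [exact: cf|exact: fst_cont].
have f2 : (fun y => (f y).2) @ x --> (f x).2.
  by apply: continuous_comp; [exact: cf|exact: snd_cont].
have g1 : (fun y => (g y).1) @ x --> (g x).1.
  by apply: continuous_comp; [exact: cg|exact: fst_cont].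
have g2 : (fun y => (g y).2) @ x --> (g x).2.
  by apply: continuous_comp; [exact: cg|exact: snd_cont].
rewrite /circle_mul.
apply: (@cvg_pair _ _ _ _ _ _ FF (nbhs_filter _) (nbhs_filter _)).
- exact: (@cvgB _ _ _ _ FF _ _ _ _ (@cvgM _ _ _ FF _ _ _ _ f1 g1) (@cvgM _ _ _ FF _ _ _ _ f2 g2)).
- exact: (@cvgD _ _ _ _ FF _ _ _ _ (@cvgM _ _ _ FF _ _ _ _ f1 g2) (@cvgM _ _ _ FF _ _ _ _ f2 g1)).
Qed.

Lemma circ_mul (z w : R * R) : circle z -> circle w -> circle (circle_mul z w).
Proof.
rewrite /circle /circle_mul /= => hz hw.
have -> : (z.1 * w.1 - z.2 * w.2) ^+ 2 + (z.1 * w.2 + z.2 * w.1) ^+ 2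
   = (z.1 ^+ 2 + z.2 ^+ 2) * (w.1 ^+ 2 + w.2 ^+ 2) by ring.
by rewrite hz hw mul1r.
Qed.

Lemma circ_idem (z : R * R) : circle z -> circle_mul z z = z -> z = (1, 0).
Proof.
case: z => a b; rewrite /circle /circle_mul /= => hc [e1 e2].
have hb : b * (2 * a - 1) = 0 by rewrite -[X in _ = X](subrr b); rewrite -{2}e2; ring.
move/eqP: hb; rewrite mulf_eq0 => /orP[/eqP b0|/eqP a2].
  subst b; move: hc e1; rewrite expr0n /= addr0 mul0r subr0 => hc e1.
  have : a = 1 by rewrite -e1 -expr2 hc.
  by move=> ->.
exfalso; move: hc; rewrite !expr2 => hc; nra.
Qed.


Lemma circ_inv2 (z : R * R) : circle z -> circle_mul z z = (1, 0) ->
  z.2 = 0 /\ (z.1 = 1 \/ z.1 = -1).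
Proof.
case: z => a b; rewrite /circle /circle_mul /= => hc [e1 e2].
have b0 : b = 0.
  have : b * b = 0 by move: hc; rewrite !expr2 => hc; lra.
  by move/eqP; rewrite mulf_eq0 orbb => /eqP.
subst b; split => //.
have : (a - 1) * (a + 1) = 0 by move: e1; rewrite !mul0r subr0 => e1; rewrite -[RHS](subrr 1) -[X in _ = X - _]e1; ring.
by move/eqP; rewrite mulf_eq0 => /orP[/eqP h|/eqP h]; [left|right]; lra.
Qed.

Lemma SA_const (f : @SA R -> R * R) : continuous f ->
  (forall x, (f x).2 = 0 /\ ((f x).1 = 1 \/ (f x).1 = -1)) ->
  forall x, f x = f (toA 0).
Proof.
move=> cf hf x.
pose phi (z : R) := (f (toA z)).1.
have cphi : continuous phi.
  move=> z; apply: continuous_comp; last exact: fst_cont.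
  by apply: continuous_comp; [exact: toA_cont|exact: cf].
have x0 : 0 <= val x by have := set_valP x.
have e1 : (f x).1 = (f (toA 0)).1.
  have ex : phi (val x) = (f x).1 by rewrite /phi toA_val.
  apply/eqP; apply/negP => /eqP ne.
  have [c _ hc] : exists2 c, c \in `[0, val x] & phi c = 0.
    apply: IVT => //; first exact: continuous_subspaceT.
    have [_ h1] := hf (toA 0); have [_ h2] := hf x.
    rewrite ex /phi.
    move: ne h1 h2; move: (f x).1 (f (toA 0)).1 => b a ne h1 h2.
    rewrite ge_min le_max; apply/andP; split; apply/orP;
    case: h1 h2 ne => -> [] -> ne; try (by move: ne; rewrite eqxx);
    first [left; lra | right; lra].
  have := hf (toA c); rewrite /phi in hc; rewrite hc; move=> [_ []]; lra.
move: e1; have [e2 _] := hf x; have [e3 _] := hf (toA 0).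
case: (f x) e2 => a b /= ->; case: (f (toA 0)) e3 => a' b' /= -> -> //.
Qed.


Definition uB (y : @SB R) : R * R := (Num.max (-1) (Num.min 1 (2 * val y + 1)), 0).

Lemma uB_cont : continuous uB.
Proof.
move=> y; have FF : Filter (nbhs y) := nbhs_filter y.
apply: (@cvg_pair _ _ _ _ _ _ FF (nbhs_filter _) (nbhs_filter _)); last exact: cvg_cst.
have h : continuous (fun z : R => Num.max (-1) (Num.min 1 (2 * z + 1))).
  move=> z; apply: (@continuous_max R R (fun _ => -1) (fun z => Num.min 1 (2 * z + 1))).
    exact: cvg_cst.
  apply: (@continuous_min R R (fun _ => 1) (fun z => 2 * z + 1)); first exact: cvg_cst.
  apply: cvgD; [apply: cvgMr; exact: cvg_id|exact: cvg_cst].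
have := @continuous_comp _ _ _ (fun y : @SB R => val y) _ y (@val_cont R _ y) (h _); exact.
Qed.

Lemma uB_m1 : uB (toB (-1)) = (-1, 0).
Proof.
rewrite /uB /=.
have -> : (0 <= (-1 : R)) = false by apply/negbTE; rewrite -ltNge ltrN10.
congr (_, _).
have -> : 2 * -1 + 1 = -1 :> R by ring.
have -> : Num.min 1 (-1) = -1 :> R by apply/min_idPr; lra.
by apply/max_idPl; lra.
Qed.

Lemma uB_0 : uB (toB 0) = (1, 0).
Proof.
rewrite /uB /= lexx; congr (_, _).
have -> : 2 * 0 + 1 = 1 :> R by ring.
have -> : Num.min 1 1 = 1 :> R by apply/min_idPl; lra.
by apply/max_idPr; lra.
Qed.

Lemma uB_sq y : circle_mul (uB y) (uB y) = (1, 0).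
Proof.
rewrite /uB /circle_mul /=.
have := set_valP y; rewrite /SB /= => -[e|e].
  have -> : 2 * sval y + 1 = -1 :> R by rewrite e; ring.
  have -> : Num.min 1 (-1) = -1 :> R by apply/min_idPr; lra.
  have -> : Num.max (-1) (-1) = -1 :> R by apply/max_idPl; lra.
  congr (_, _); ring.
have -> : Num.min 1 (2 * sval y + 1) = 1 :> R by apply/min_idPl; lra.
have -> : Num.max (-1) 1 = 1 :> R by apply/max_idPr; lra.
congr (_, _); ring.
Qed.

Lemma circ_10 : circle ((1, 0) : R * R).
Proof. by rewrite /circle /= expr1n expr0n /= addr0. Qed.
Lemma circ_m10 : circle ((-1, 0) : R * R).
Proof. by rewrite /circle /= sqrrN expr1n expr0n /= addr0. Qed.
Lemma circ_sq_cst (a : R * R) : a = (1,0) \/ a = (-1,0) -> circle_mul a a = (1, 0).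
Proof. by case=> ->; rewrite /circle_mul /=; congr (_, _); ring. Qed.


Lemma myPsi_add (f g : {ptws @SA R -> R}) :
  myPsi (fun x => f x + g x) = (fun y => myPsi f y + myPsi g y).
Proof.
apply: funext => y; rewrite /myPsi /Lf /ef.
set a := Num.floor _.
ring.
Qed.

Lemma R_iso : @Cp_top_iso R setT +%R (@SA R) (@SB R).
Proof.
exists (@myPsi R), (@myPhi R); split.
- split => f [cf _]; split => //.
  + exact: myPsi_cont.
  + exact: myPhi_cont.
- split => f _; apply: funext => x; [exact: PhiPsi|exact: PsiPhi].
- move=> f g _ _; exact: myPsi_add.
- by apply: continuous_subspaceT; exact: myPsi_ptws.
- by apply: continuous_subspaceT; exact: myPhi_ptws.
Qed.


Lemma T_noniso : ~ @Cp_top_iso (R * R)%type (@circle R) (@circle_mul R) (@SA R) (@SB R).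
Proof.
move=> [Phi [Psi [[CP1 CP2] [I1 I2] H C1 C2]]].
pose oneA : {ptws @SA R -> (R * R)%type} := fun _ => (1, 0).
pose moneA : {ptws @SA R -> (R * R)%type} := fun _ => (-1, 0).
pose oneB : {ptws @SB R -> (R * R)%type} := fun _ => (1, 0).
pose moneB : {ptws @SB R -> (R * R)%type} := fun _ => (-1, 0).
have CoA : Cp (@circle R) oneA by split; [exact: cst_continuous|move=> ?; exact: circ_10].
have CmA : Cp (@circle R) moneA by split; [exact: cst_continuous|move=> ?; exact: circ_m10].
have CoB : Cp (@circle R) oneB by split; [exact: cst_continuous|move=> ?; exact: circ_10].
have CmB : Cp (@circle R) moneB by split; [exact: cst_continuous|move=> ?; exact: circ_m10].
have CuB : Cp (@circle R) (uB : {ptws @SB R -> (R * R)%type}).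
  split; first exact: uB_cont.
  move=> y; rewrite /uB /circle /=.
  have := set_valP y; rewrite /SB /= => -[e|e].
    have -> : 2 * sval y + 1 = -1 :> R by rewrite e; ring.
    have -> : Num.min 1 (-1) = -1 :> R by apply/min_idPr; lra.
    have -> : Num.max (-1) (-1) = -1 :> R by apply/max_idPl; lra.
    ring.
  have -> : Num.min 1 (2 * sval y + 1) = 1 :> R by apply/min_idPl; lra.
  have -> : Num.max (-1) 1 = 1 :> R by apply/max_idPr; lra.
  ring.
have P1 : Phi oneA = oneB.
  have := H _ _ CoA CoA.
  have -> : (fun x => circle_mul (oneA x) (oneA x)) = oneA.
    by apply: funext => x; rewrite /oneA /circle_mul /=; congr (_, _); ring.
  move=> e; apply: funext => y.
  have e1 := congr1 (fun h => h y) e; simpl in e1.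
  exact: (circ_idem ((CP1 _ CoA).2 y) (esym e1)).
have step : forall g : {ptws @SB R -> (R * R)%type}, Cp (@circle R) g ->
    (forall y, circle_mul (g y) (g y) = (1, 0)) -> g = oneB \/ g = Phi moneA.
  move=> g Cg sq.
  pose f := Psi g; have Cf : Cp (@circle R) f := CP2 _ Cg.
  have Pf : Phi f = g := I2 _ Cg.
  have Cff : Cp (@circle R) (fun x => circle_mul (f x) (f x)).
    split; first by apply: cmul_cont; exact: Cf.1.
    move=> x; apply: circ_mul; exact: Cf.2.
  have ff : (fun x => circle_mul (f x) (f x)) = oneA.
    rewrite -(I1 _ Cff) -(I1 _ CoA) H // Pf P1.
    by congr Psi; apply: funext => y; rewrite sq.
  have hf : forall x, (f x).2 = 0 /\ ((f x).1 = 1 \/ (f x).1 = -1).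
    move=> x; apply: circ_inv2; first exact: Cf.2.
    exact: (congr1 (fun h => h x) ff).
  have cst := SA_const Cf.1 hf.
  have [e2 [e1|e1]] := hf (toA 0).
    left; rewrite -Pf -P1; congr Phi; apply: funext => x; rewrite cst.
    by rewrite /oneA; case: (f (toA 0)) e1 e2 => a b /= -> ->.
  right; rewrite -Pf; congr Phi; apply: funext => x; rewrite cst.
  by rewrite /moneA; case: (f (toA 0)) e1 e2 => a b /= -> ->.
have neq : ((-1, 0) : R * R) <> (1, 0) by case; lra.
have [eB|eB] := step moneB CmB (fun y => circ_sq_cst (or_intror erefl)).
  by apply: neq; exact: (congr1 (fun h => h (toB 0)) eB).
have [eu|eu] := step _ CuB (@uB_sq).
  by apply: neq; rewrite -uB_m1; exact: (congr1 (fun h => h (toB (-1))) eu).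
have e := congr1 (fun h => h (toB 0)) (etrans eu (esym eB)); simpl in e.
by apply: neq; rewrite -uB_0 e.
Qed.

End S.

Theorem proposition10p11 (R : realType) :
  exists X Y : topologicalType,
    [/\ tychonoff_space X, tychonoff_space Y,
        @Cp_top_iso R setT +%R X Y &
        ~ @Cp_top_iso (R * R)%type (@circle R) (@circle_mul R) X Y].
Proof.
exists (set_type (@SA R)), (set_type (@SB R)); split.
- exact: set_tych.
- exact: set_tych.
- exact: R_iso.
- exact: T_noniso.
Qed.
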